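(* Let $(X,d)$ be a compact metric space whose open balls are connected, $\lambda\in(0,1)$, $U\subset\mathbb{R}^M$ of positive Lebesgue measure, $\{f_\mu\}_{\mu\in U}$ a family of piecewise $\lambda$-contractions on $X$, and $\mu^*\in U$. If $\{\mathscr{C}^{(n)}_\mu\}_{\mu\in U}$ is stable at $\mu^*$ for every $n\ge1$ and $H_{\mathrm{mult}}(f_{\mu^*})=0$, then $\{f_\mu\}_{\mu\in U}$ satisfies Hypothesis (E) at $\mu^*$.
   Context: A piecewise $\lambda$-contraction $f\colon X\to X$: there exist $N\in\mathbb{N}$, open connected pairwise disjoint $A_1,\dots,A_N\subset X$ with dense union $X'$, and bi-Lipschitz $\varphi_i\colon X\to X$ with Lipschitz constant $\le\lambda$ and $f|_{A_i}=\varphi_i|_{A_i}$; $S(f)=X\setminus X'$. A family $\{f_\mu\}_{\mu\in U}$: each $f_\mu$ is such a map with the same label set $\mathcal{A}=\{1,\dots,N\}$, partition $\{A_{i,\mu}\}$ and maps $\{\varphi_{i,\mu}\}$. A point $x$ is regular of order $n$ for $f_\mu$ if $f_\mu^j(x)\notin S(f_\mu)$ for $0\le j<n$; its itinerary of order $n$ is $(i_0,\dots,i_{n-1})$ with $f_\mu^j(x)\in A_{i_j,\mu}$; $\mathcal{I}_n(f_\mu)$ is the set of such itineraries. $\mathscr{C}^{(1)}_\mu=\{A_{i,\mu}\}_{i\in\mathcal{A}}$, and for $n\ge2$, $\mathscr{C}^{(n)}_\mu$ is the collection of the nonempty sets $A^\alpha_\mu=A_{i_0,\mu}\cap\varphi_{i_0,\mu}^{-1}(A_{i_1,\mu})\cap\cdots\cap(\varphi_{i_{n-2},\mu}\circ\cdots\circ\varphi_{i_0,\mu})^{-1}(A_{i_{n-1},\mu})$,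 $\alpha=(i_0,\dots,i_{n-1})\in\mathcal{A}^n$. For a finite collection $\mathscr{C}$ of subsets of $X$, $\mathrm{mult}(\mathscr{C})=\max_{x\in X}\#\{A\in\mathscr{C}:x\in\overline A\}$. $H_{\mathrm{mult}}(f_\mu)=\limsup_{n\to\infty}\frac1n\log\mathrm{mult}(\mathscr{C}^{(n)}_\mu)$. Let $U_\delta(\mu^* )=U\cap B_\delta(\mu^* )$. For fixed $n$, $\{\mathscr{C}^{(n)}_\mu\}_{\mu\in U}$ is stable at $\mu^*$ if there is $\delta>0$ with (i) $\mathcal{I}_n(f_\mu)=\mathcal{I}_n(f_{\mu^*})$ for all $\mu\in U_\delta(\mu^* )$, and (ii) $d_H(A^\alpha_\mu,A^\alpha_{\mu^*})\to0$ as $\mu\to\mu^*$ for every $\alpha\in\mathcal{I}_n(f_{\mu^*})$, where $d_H$ is the Hausdorff distance. Hypothesis (E) at $\mu^*$: $\lim_{\delta\to0^+}\limsup_{n\to\infty}\frac1n\log\#\mathcal{J}_n^\delta(\mu^* )=0$, where $\mathcal{J}_n^\delta(\mu^* )=\bigcup_{\mu\in U_\delta(\mu^* )}\mathcal{I}_n(f_\mu)$. *)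

(* Defs.v *)
From HB Require Import structures.
From mathcomp Require Import all_boot all_order all_algebra.
From mathcomp Require Import all_classical all_reals all_analysis.
Set Implicit Arguments. Unset Strict Implicit. Unset Printing Implicit Defensive.
Import Order.TTheory GRing.Theory Num.Theory Num.Def.
Import numFieldNormedType.Exports.
Local Open Scope classical_set_scope.
Local Open Scope ring_scope.

Section Defs.
Variable R : realType.

Definition box (M : nat) (a b : 'rV[R]_M) : set 'rV[R]_M :=
  [set x | forall i : 'I_M, a ord0 i <= x ord0 i <= b ord0 i].
Definition box_vol (M : nat) (a b : 'rV[R]_M) : R :=
  \prod_(i < M) maxr 0 (b ord0 i - a ord0 i).
(* U is Lebesgue-null: for every e > 0, U is covered by countably many
   boxes of total volume <= e (i.e. Lebesgue outer measure of U is 0). *)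
Definition lebesgue_null (M : nat) (U : set 'rV[R]_M) : Prop :=
  forall e : R, 0 < e -> exists a b : nat -> 'rV[R]_M,
    U `<=` \bigcup_k box (a k) (b k) /\
    forall n, \sum_(k < n) box_vol (a k) (b k) <= e.
Definition positive_lebesgue_measure (M : nat) (U : set 'rV[R]_M) : Prop :=
  ~ lebesgue_null U.

Variable X : metricType R.
Local Notation d := (@mdist R X).

Definition bi_lipschitz_le (lam : R) (g : X -> X) : Prop :=
  exists c : R, 0 < c /\
    forall x y, c * d x y <= d (g x) (g y) /\ d (g x) (g y) <= lam * d x y.

Definition partition_union (N : nat) (A : 'I_N -> set X) : set X :=
  \bigcup_(i in [set: 'I_N]) A i.

Definition singular_set (N : nat) (A : 'I_N -> set X) : set X :=
  ~` partition_union A.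

Definition piecewise_contraction (lam : R) (N : nat)
    (A : 'I_N -> set X) (phi : 'I_N -> X -> X) (f : X -> X) : Prop :=
  [/\ forall i, open (A i) /\ connected (A i),
      forall i j, i != j -> A i `&` A j = set0,
      closure (partition_union A) = [set: X],
      forall i, bi_lipschitz_le lam (phi i)
    & forall i x, A i x -> f x = phi i x].

Definition regular_of_order (N : nat) (A : 'I_N -> set X) (f : X -> X)
    (n : nat) (x : X) : Prop :=
  forall j, (j < n)%N -> ~ singular_set A (iter j f x).

Definition is_itinerary (N n : nat) (A : 'I_N -> set X) (f : X -> X)
    (x : X) (al : n.-tuple 'I_N) : Prop :=
  forall j : 'I_n, A (tnth al j) (iter j f x).

Definition itineraries (N : nat) (A : 'I_N -> set X) (f : X -> X) (n : nat)
  : {set n.-tuple 'I_N} :=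
  [set al | `[< exists x, regular_of_order A f n x /\ is_itinerary A f x al >]].

Definition phi_comp (N : nat) (phi : 'I_N -> X -> X) (s : seq 'I_N) (x : X) : X :=
  foldl (fun y i => phi i y) x s.

Definition cell (N n : nat) (A : 'I_N -> set X) (phi : 'I_N -> X -> X)
    (al : n.-tuple 'I_N) : set X :=
  [set x | forall j : 'I_n, A (tnth al j) (phi_comp phi (take j al) x)].

(* mult(C^(n)) = max_x #{ B in C^(n) : x in closure B }, where C^(n) consists
   of the nonempty cells (distinct nonempty cells have distinct labels). *)
Definition mult_cells (N : nat) (A : 'I_N -> set X) (phi : 'I_N -> X -> X)
    (n : nat) : R :=
  sup [set (#|[set al : n.-tuple 'I_N |
                 `[< cell A phi al !=set0 /\ closure (cell A phi al) x >]]|)%:R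
      | x in [set: X]].

Definition H_mult (N : nat) (A : 'I_N -> set X) (phi : 'I_N -> X -> X)
  : \bar R :=
  limn_esup (fun n : nat => ((n%:R)^-1 * ln (mult_cells A phi n))%:E).

Definition point_set_dist (x : X) (B : set X) : R := inf [set d x b | b in B].
Definition hausdorff_dist (A B : set X) : R :=
  maxr (sup [set point_set_dist a B | a in A])
       (sup [set point_set_dist b A | b in B]).

Variables (M N : nat) (U : set 'rV[R]_M)
  (A : 'rV[R]_M -> 'I_N -> set X) (phi : 'rV[R]_M -> 'I_N -> X -> X)
  (f : 'rV[R]_M -> X -> X).

Definition U_delta (mu0 : 'rV[R]_M) (delta : R) : set 'rV[R]_M :=
  U `&` ball mu0 delta.

Definition cells_stable_at (n : nat) (mu0 : 'rV[R]_M) : Prop :=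
  exists delta : R, 0 < delta /\
   (forall mu, U_delta mu0 delta mu ->
       itineraries (A mu) (f mu) n = itineraries (A mu0) (f mu0) n) /\
   (forall al, al \in itineraries (A mu0) (f mu0) n ->
       (fun mu => hausdorff_dist (cell (A mu) (phi mu) al)
                                 (cell (A mu0) (phi mu0) al))
         @ within U (nbhs mu0) --> (0 : R)).

Definition J_set (n : nat) (delta : R) (mu0 : 'rV[R]_M) : {set n.-tuple 'I_N} :=
  [set al | `[< exists2 mu, U_delta mu0 delta mu &
                al \in itineraries (A mu) (f mu) n >]].

Definition hypothesis_E (mu0 : 'rV[R]_M) : Prop :=
  (fun delta : R =>
     limn_esup (fun n : nat => ((n%:R)^-1 * ln (#|J_set n delta mu0|)%:R)%:E))
    @ 0^'+ --> (0 : \bar R).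

End Defs.

(* Main.v *)
Require Import Defs.
From HB Require Import structures.
From mathcomp Require Import all_boot all_order all_algebra.
From mathcomp Require Import all_classical all_reals all_analysis.
From mathcomp Require Import zify.
Import Order.TTheory GRing.Theory Num.Theory Num.Def.
Import numFieldNormedType.Exports.
Local Open Scope classical_set_scope.
Local Open Scope ring_scope.
Set Implicit Arguments. Unset Strict Implicit.


Section P1.
Variables (R : realType) (X : metricType R) (N : nat).
Variables (A : 'I_N -> set X) (phi : 'I_N -> X -> X).

Fixpoint cellS (s : seq 'I_N) (x : X) : Prop :=
  match s with [::] => True | a :: s' => A a x /\ cellS s' (phi a x) end.

Lemma phi_comp_cons a s x : phi_comp phi (a :: s) x = phi_comp phi s (phi a x).
Proof. by []. Qed.

Lemma phi_comp_cat s t x : phi_comp phi (s ++ t) x = phi_comp phi t (phi_comp phi s x).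
Proof. by rewrite /phi_comp foldl_cat. Qed.

Lemma cellS_nth s x : cellS s x <->
  (forall j a, (j < size s)%N -> A (nth a s j) (phi_comp phi (take j s) x)).
Proof.
elim: s x => [|b s IH] x /=; first by split.
split.
- move=> [Ab /IH H] [|j] a /= => [_|]; first by [].
  rewrite ltnS => js; exact: H.
- move=> H; split; first exact: (H 0%N b).
  apply/IH => j a js; exact: (H j.+1 a).
Qed.

Lemma cell_cellS n (al : n.-tuple 'I_N) : cell A phi al = cellS al.
Proof.
apply/seteqP; split => x /=.
- move=> H; apply/cellS_nth => j a; rewrite size_tuple => jn.
  have := H (Ordinal jn); rewrite (tnth_nth a) //.
- move/cellS_nth => H j; rewrite (tnth_nth (tnth al j)); apply: H.
  by rewrite size_tuple.
Qed.

Lemma cellS_cat s t x : cellS (s ++ t) x <-> cellS s x /\ cellS t (phi_comp phi s x).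
Proof.
elim: s x => [|b s IH] x /=; first by split => [H|[]].
rewrite IH; tauto.
Qed.

Lemma itin_cellS (f : X -> X) : (forall i y, A i y -> f y = phi i y) ->
  forall s x, (forall j a, (j < size s)%N -> A (nth a s j) (iter j f x)) -> cellS s x.
Proof.
move=> fphi; elim => [|b s IH] x H //=.
have Ab : A b x by exact: (H 0%N b).
split => //; apply: IH => j a js.
rewrite -(fphi _ _ Ab) -iterSr; exact: (H j.+1 a).
Qed.

End P1.


Lemma memcs (T : finType) (P : T -> Prop) x : (x \in [set y | `[< P y >]]) = `[< P x >].
Proof. apply/idP/idP; rewrite in_setE //. Qed.

Lemma cardcs (T : finType) (P : T -> Prop) :
  #|[set x | `[<P x>]]| = #|[pred x | `[<P x>]]|.
Proof. by apply: eq_card => x; rewrite memcs inE. Qed.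
Lemma card_le_sub (T : finType) (P Q : T -> Prop) : (forall x, P x -> Q x) ->
  (#|[set x | `[<P x>]]| <= #|[set x | `[<Q x>]]|)%N.
Proof.
move=> H; rewrite !cardcs; apply: subset_leq_card; apply/fintype.subsetP => x; rewrite !inE => /asboolP/asboolP Px; apply/asboolP/asboolP; exact: H.
Qed.

Section P2.
Variables (R : realType) (X : metricType R) (N : nat).
Variables (A : 'I_N -> set X) (phi : 'I_N -> X -> X).
Local Notation d := (@mdist R X).

Lemma eps_lemma (n0 : nat) : compact [set: X] ->
  exists2 e : R, 0 < e & forall y : X, exists x : X, forall b : n0.-tuple 'I_N,
    (exists z, cellS A phi b z /\ ball y e z) -> closure (cell A phi b) x.
Proof.
move=> /compact_near_coveringP cpt.
have loc : forall x : X, exists2 r : R, 0 < r & forall b : n0.-tuple 'I_N,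
    forall z, ball x r z -> cellS A phi b z -> closure (cell A phi b) x.
  move=> x.
  have : \forall z \near x, forall b : n0.-tuple 'I_N,
      cellS A phi b z -> closure (cell A phi b) x.
    apply: filter_forall => b.
    have [cl|ncl] := pselect (closure (cell A phi b) x).
      by apply: nearW.
    move: ncl => /existsNP[B /not_implyP[nB /set0P/negP/negPn/eqP B0]].
    apply: filterS nB => z Bz bz; exfalso.
    have : (cell A phi b `&` B) z by split => //; rewrite cell_cellS.
    by rewrite B0.
  move=> /nbhs_ballP[r /= r0 rH]; exists r => // b z xz bz.
  exact: (rH z xz b bz).
have H : \forall e \near (0:R)^'+, [set: X] `<=` (fun y => exists x : X, forall b : n0.-tuple 'I_N,
    (exists z, cellS A phi b z /\ ball y e z) -> closure (cell A phi b) x).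
  apply: cpt => x _; have [r r0 rH] := loc x.
  exists (ball x (r / 2), [set e | 0 < e < r / 2]).
    split => //=; first by apply: nbhsx_ballx; rewrite divr_gt0.
    near=> e; apply/andP; split; near: e; first exact: nbhs_right_gt.
    by apply: nbhs_right_lt; rewrite divr_gt0.
  move=> [x' e] [/= xx' /andP[e0 er]]; exists x => b [z [bz x'z]].
  apply: (rH b z) => //.
  have xx'' : mdist x x' < r / 2 by move: xx'; rewrite ballEmdist.
  have x'z' : mdist x' z < e by move: x'z; rewrite ballEmdist.
  rewrite ballEmdist /= (le_lt_trans (metric_triangle _ x' _)) //.
  by rewrite [r]splitr ltrD // (lt_trans x'z' er).
have [e e0 He] : exists2 e : R, 0 < e & [set: X] `<=` (fun y => exists x : X, forall b : n0.-tuple 'I_N,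
    (exists z, cellS A phi b z /\ ball y e z) -> closure (cell A phi b) x).
  near (0:R)^'+ => e.
  exists e; near: e; [exact: nbhs_right_gt | exact: H].
by exists e => // y; exact: He.
Unshelve. all: by end_near. Qed.


Lemma dist_bound : compact [set: X] -> exists D : R, forall x y : X, d x y <= D.
Proof.
move=> /compact_near_coveringP cpt.
have [[x0 _]|nX] := pselect (exists x : X, True); last first.
  by exists 0 => x; exfalso; apply: nX; exists x.
have H : \forall D \near +oo, [set: X] `<=` (fun y => d x0 y <= D).
  apply: cpt => x _.
  exists (ball x 1, [set D | d x0 x + 1 < D]).
    split => //=; first by apply: nbhsx_ballx.
    exact: nbhs_pinfty_gt (num_real _).
  move=> [x' D] [/= xx' /= DD].
  have xx'' : d x x' < 1 by move: xx'; rewrite ballEmdist.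
  rewrite (le_trans (metric_triangle _ x _)) // ltW //.
  by rewrite (lt_trans _ DD) // ltrD2l.
have [B HB] : exists B : R, [set: X] `<=` (fun y => d x0 y <= B).
  by near +oo_R => B; exists B; near: B; exact: H.
exists (B + B) => x y.
rewrite (le_trans (metric_triangle _ x0 _)) // metric_sym.
by rewrite lerD //; [exact: HB|exact: HB].
Unshelve. all: by end_near. Qed.

Lemma phi_comp_lip (lam : R) : 0 <= lam ->
  (forall i x y, d (phi i x) (phi i y) <= lam * d x y) ->
  forall s x y, d (phi_comp phi s x) (phi_comp phi s y) <= lam ^+ size s * d x y.
Proof.
move=> lam0 Hl; elim => [|a s IH] x y /=; first by rewrite expr0 mul1r.
rewrite (le_trans (IH _ _)) // exprSr -mulrA ler_wpM2l //.
exact: exprn_ge0.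
Qed.

Lemma mult_ub (n0 : nat) (x : X) :
  (#|[set al : n0.-tuple 'I_N | `[< cell A phi al !=set0 /\ closure (cell A phi al) x >]]|%:R
    <= mult_cells A phi n0).
Proof.
apply: sup_upper_bound; last by exists x.
split; first by eexists; exists x.
exists (#|{: n0.-tuple 'I_N}|%:R) => _ [y _ <-].
by rewrite ler_nat max_card.
Qed.

Lemma KL (n0 : nat) (lam : R) : compact [set: X] -> 0 < lam < 1 ->
  (forall i x y, d (phi i x) (phi i y) <= lam * d x y) ->
  exists m, forall g : seq 'I_N, size g = m ->
  (#|[set b : n0.-tuple 'I_N | `[< exists x, cellS A phi (g ++ b) x >]]|%:R
     <= maxr 1 (mult_cells A phi n0)).
Proof.
move=> cpt /andP[lam0 lam1] Hl.
have [e e0 He] := eps_lemma n0 cpt.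
have [D HD] := dist_bound cpt.
pose c := e / (`|D| + 1).
have c0 : 0 < c by rewrite divr_gt0 // ltr_wpDl.
have lamn : `|lam| < 1 by rewrite ger0_norm // ltW.
have [m _ Hm] := cvgr0_norm_lt _ (cvg_expr lamn) _ c0.
exists m => g sg.
have [[b0 [x0 /cellS_cat[gx0 _]]]|nS] :=
  pselect (exists b : n0.-tuple 'I_N, exists x, cellS A phi (g ++ b) x); last first.
  rewrite eq_card0; first by rewrite le_max ler01.
  move=> b; rewrite memcs inE; apply/negbTE/asboolP => -[x H]; apply: nS.
  by exists b, x.
have [x Hx] := He (phi_comp phi g x0).
rewrite le_max; apply/orP; right.
apply: le_trans (mult_ub n0 x); rewrite ler_nat.
apply: card_le_sub => b [z /cellS_cat[gz bz]].
have bl : ball (phi_comp phi g x0) e (phi_comp phi g z).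
  rewrite ballEmdist /=.
  rewrite (le_lt_trans (phi_comp_lip (ltW lam0) Hl _ _ _)) // sg.
  have := Hm m (leqnn m); rewrite /= normrX ger0_norm ?(ltW lam0) // => lm.
  have Dz : d x0 z <= `|D| + 1.
    by rewrite (le_trans (HD x0 z)) // (le_trans (ler_norm D)) // lerDl.
  rewrite (le_lt_trans (ler_wpM2l (exprn_ge0 _ (ltW lam0)) Dz)) //.
  by rewrite -ltr_pdivlMr ?ltr_wpDl.
split; last by apply: Hx; exists (phi_comp phi g z).
by exists (phi_comp phi g z); rewrite cell_cellS.
Qed.
End P2.


Lemma drop_cat_le (T : Type) n (s t : seq T) : (n <= size s)%N -> drop n (s ++ t) = drop n s ++ t.
Proof.
move=> ns; rewrite drop_cat; case: ltnP => // sn.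
have -> : n = size s by apply/eqP; rewrite eqn_leq ns sn.
by rewrite subnn drop0 drop_size.
Qed.

Lemma take_drop_cat (T : Type) L i (s t : seq T) : (i + L <= size s)%N ->
  take L (drop i (s ++ t)) = take L (drop i s).
Proof.
move=> iL; rewrite drop_cat_le ?(leq_trans (leq_addr _ _) iL) //.
by rewrite takel_cat // size_drop leq_subRL // (leq_trans (leq_addr _ _) iL).
Qed.

Section Count.
Variables (R : realType) (N : nat) (W : seq 'I_N -> Prop) (m n0 : nat) (K : R).
Hypothesis HW : forall g : seq 'I_N, size g = m ->
  #|[set b : n0.-tuple 'I_N | `[< W (g ++ b) >]]|%:R <= K.
Hypothesis K1 : 1 <= K.
Hypothesis n0pos : (0 < n0)%N.

Let L := (m + n0)%N.
Definition Pw (s : seq 'I_N) : Prop :=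
  forall i, (i + L <= size s)%N -> W (take L (drop i s)).

Lemma Pw_prefix s t : Pw (s ++ t) -> Pw s.
Proof.
move=> H i iL; rewrite -(take_drop_cat t iL); apply: H.
by rewrite size_cat (leq_trans iL) // leq_addr.
Qed.

Lemma count_step q : (m <= q)%N ->
  #|[set a : (q + n0).-tuple 'I_N | `[< Pw a >]]|%:R <=
  #|[set a : q.-tuple 'I_N | `[< Pw a >]]|%:R * K.
Proof.
move=> mq.
have szt (a : (q + n0).-tuple 'I_N) : size (take q a) == q.
  by rewrite size_takel // size_tuple leq_addr.
have szd (a : (q + n0).-tuple 'I_N) : size (drop q a) == n0.
  by rewrite size_drop size_tuple addKn.
pose sp (a : (q + n0).-tuple 'I_N) := (Tuple (szt a), Tuple (szd a)).
have sp_inj : injective sp.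
  move=> a b E.
  have E1 := congr1 (fun x => val x.1) E; have E2 := congr1 (fun x => val x.2) E.
  simpl in E1, E2.
  by apply: val_inj; rewrite /= -(cat_take_drop q a) -(cat_take_drop q b) E1 E2.
pose Q (g : q.-tuple 'I_N) (b : n0.-tuple 'I_N) := `[< Pw (g ++ b) >].
have step1 : (#|[set a : (q + n0).-tuple 'I_N | `[< Pw a >]]| <=
    #|[pred gb : q.-tuple 'I_N * n0.-tuple 'I_N | Q gb.1 gb.2]|)%N.
  rewrite cardcs -(card_imset _ sp_inj); apply: subset_leq_card.
  apply/fintype.subsetP => x /imsetP[a Pa ->]; move: Pa.
  by rewrite !inE /Q /= cat_take_drop.
have step2 : #|[pred gb : q.-tuple 'I_N * n0.-tuple 'I_N | Q gb.1 gb.2]| =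
    (\sum_(g : q.-tuple 'I_N) #|[pred b : n0.-tuple 'I_N | Q g b]|)%N.
  rewrite -sum1_card.
  transitivity (\sum_(g : q.-tuple 'I_N) \sum_(b : n0.-tuple 'I_N | Q g b) 1)%N.
    by rewrite pair_big_dep /=; apply: eq_bigl => -[g b]; rewrite inE.
  apply: eq_bigr => g _; rewrite -sum1_card; apply: eq_bigl => b; rewrite inE.
  by [].
apply: (@le_trans _ _ (#|[pred gb : q.-tuple 'I_N * n0.-tuple 'I_N | Q gb.1 gb.2]|%:R)).
  by rewrite ler_nat.
rewrite step2 natr_sum cardcs -sum1_card natr_sum mulr_suml [X in _ <= X]big_mkcond /=.
apply: ler_sum => g _; rewrite inE mul1r.
case: (boolP `[< Pw g >]) => Pg.
  have sz : size (drop (q - m) g) = m by rewrite size_drop size_tuple subKn.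
  apply: le_trans (HW sz).
  rewrite ler_nat cardcs; apply: subset_leq_card.
  apply/fintype.subsetP => b; rewrite !inE /Q => /asboolP/asboolP H.
  apply/asboolP/asboolP.
  have := H (q - m)%N; rewrite size_cat !size_tuple /L addnA subnK //.
  move=> /(_ (leqnn _)).
  rewrite drop_cat_le ?size_tuple ?leq_subr // take_oversize //.
  by rewrite size_cat size_drop !size_tuple subKn.
rewrite eq_card0 //= => b; rewrite !inE /Q; apply/negbTE; apply: contra Pg.
move=> /asboolP H; apply/asboolP.
move: H; apply: Pw_prefix.
Qed.

Lemma count_all p :
  #|[set a : p.-tuple 'I_N | `[< Pw a >]]|%:R <=
  ((maxn N 1) ^ (L + n0))%:R * K ^+ (p %/ n0).
Proof.
have K0 : 0 <= K by rewrite (le_trans ler01).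
elim/ltn_ind: p => p IH.
case: (ltnP p (L + n0)) => hp.
  apply: le_trans (ler_peMr _ (exprn_ege1 _ K1)); last by rewrite ler0n.
  rewrite ler_nat (leq_trans (max_card _)) // card_tuple card_ord.
  have le_exp k : (N ^ k <= maxn N 1 ^ k)%N.
    by elim: k => // k IHk; rewrite !expnS leq_mul // leq_maxl.
  rewrite (leq_trans (le_exp p)) //.
  by rewrite leq_pexp2l ?leq_maxr // ltnW.
have n0p : (n0 <= p)%N by rewrite (leq_trans _ hp) // leq_addl.
have mq : (m <= p - n0)%N by move: hp; rewrite /L; lia.
move: (IH (p - n0)%N); rewrite ltn_subrL n0pos (leq_trans n0pos n0p) => /(_ isT) IHq.
rewrite -(subnK n0p).
apply: le_trans (count_step mq) _.
rewrite divnDr ?dvdnn // divnn n0pos exprD expr1 mulrA.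
by apply: ler_wpM2r.
Qed.

End Count.


Section Esup.
Variable R : realType.
Local Open Scope ereal_scope.

Lemma limn_esup_inf (v : (\bar R)^nat) : limn_esup v = ereal_inf (range (esups v)).
Proof. by rewrite limn_esup_lim; apply: cvg_lim => //; exact: cvg_esups_inf. Qed.

Lemma esup_small (v : (\bar R)^nat) (eta : R) : limn_esup v = 0 -> (0 < eta)%R ->
  exists n1, forall n, (n1 <= n)%N -> v n < eta%:E.
Proof.
move=> v0 eta0.
have : ereal_inf (range (esups v)) < eta%:E by rewrite -limn_esup_inf v0 lte_fin.
move=> /ereal_inf_lt[_ [n1 _ <-]] H; exists n1 => n hn.
apply: le_lt_trans H; apply: ereal_sup_ubound; exists n => //.
Qed.

Lemma esup_le (u : (\bar R)^nat) (b : \bar R) p1 :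
  (forall n, (p1 <= n)%N -> u n <= b) -> limn_esup u <= b.
Proof.
move=> H; rewrite limn_esup_lim; apply: lime_le; first exact: is_cvg_esups.
exists p1 => // n hn; apply: ge_ereal_sup => _ [k /= nk <-].
by apply: H; rewrite (leq_trans hn).
Qed.

Lemma esup_ge0 (u : (\bar R)^nat) : (forall n, 0 <= u n) -> 0 <= limn_esup u.
Proof.
move=> H; rewrite limn_esup_lim; apply: lime_ge; first exact: is_cvg_esups.
apply: nearW => n; apply: le_trans (H n) _; apply: ereal_sup_ubound; exists n => //=.
Qed.

End Esup.

Lemma ln_bound (R : realType) (x C K eta : R) (j p n0 : nat) : 0 <= x -> x <= C * K ^+ j ->
  1 <= C -> 1 <= K -> 0 < eta -> ln K <= n0%:R * eta -> (j * n0 <= p)%N ->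
  ln x <= ln C + p%:R * eta.
Proof.
move=> x0 xCK C1 K1 eta0 lnK jp.
have lnC0 : 0 <= ln C by exact: ln_ge0.
have C0 : 0 < C by rewrite (lt_le_trans ltr01).
have K0 : 0 < K by rewrite (lt_le_trans ltr01).
have [xle0|xgt0] := leP x 0.
  by rewrite ln0 // addr_ge0 // mulr_ge0 // ltW.
have CK0 : 0 < C * K ^+ j by rewrite mulr_gt0 // exprn_gt0.
apply: (@le_trans _ _ (ln (C * K ^+ j))).
  by rewrite ler_ln // posrE.
rewrite lnM ?posrE ?exprn_gt0 // lnXn // lerD2l.
apply: (@le_trans _ _ (n0%:R * eta * j%:R)).
  rewrite -[ln K *+ j]mulr_natr; exact: (ler_wpM2r (ler0n _ j) lnK).
rewrite mulrAC -natrM.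
have hj : ((n0 * j)%:R <= p%:R :> R) by rewrite ler_nat mulnC.
exact: (ler_wpM2r (ltW eta0) hj).
Qed.

Lemma J_sub_G (R : realType) (X : metricType R) (M N : nat) (U : set 'rV[R]_M)
  (A : 'rV[R]_M -> 'I_N -> set X) (phi : 'rV[R]_M -> 'I_N -> X -> X)
  (f : 'rV[R]_M -> X -> X) (mu0 : 'rV[R]_M) (m n0 : nat) (delta : R) (p : nat) :
  (forall i x, A mu0 i x -> f mu0 x = phi mu0 i x) ->
  (forall mu, U_delta U mu0 delta mu ->
     itineraries (A mu) (f mu) (m + n0) = itineraries (A mu0) (f mu0) (m + n0)) ->
  forall al : p.-tuple 'I_N,
  (exists2 mu, U_delta U mu0 delta mu & al \in itineraries (A mu) (f mu) p) ->
  Pw (fun s => exists x, cellS (A mu0) (phi mu0) s x) m n0 al.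
Proof.
move=> fphi stabL al [mu Umu alI] i iL.
move: alI; rewrite inE => /asboolP[x [reg itin]].
rewrite size_tuple in iL.
have szw : size (take (m + n0) (drop i al)) == (m + n0)%N.
  rewrite size_takel // size_drop size_tuple; move: iL; lia.
pose wt := Tuple szw.
have wI : wt \in itineraries (A mu) (f mu) (m + n0).
  rewrite inE; apply/asboolP; exists (iter i (f mu) x); split.
    move=> j jL; rewrite -iterD; apply: reg; move: iL jL; lia.
  move=> j.
  have ji : (j + i < p)%N by move: iL (ltn_ord j); lia.
  have := itin (Ordinal ji); rewrite (tnth_nth (tnth al (Ordinal ji))) /= -iterD.
  rewrite [tnth wt j](tnth_nth (tnth al (Ordinal ji))) /= nth_take // nth_drop [(i + j)%N]addnC.
  by apply.
have := wI; rewrite stabL // inE => /asboolP[x0 [_ itin0]].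
exists x0; apply: (itin_cellS fphi) => j a jL.
have jL' : (j < m + n0)%N by rewrite (eqP szw) in jL.
by have := itin0 (Ordinal jL'); rewrite (tnth_nth a).
Qed.

Lemma card_le_sub2 (T : finType) (P Q : T -> Prop) : (forall x, P x -> Q x) ->
  (#|[set x | `[<P x>]]%SET| <= #|[set x | `[<Q x>]]|)%N.
Proof.
move=> H; rewrite cardcs; apply: subset_leq_card; apply/fintype.subsetP => x.
rewrite !inE => /asboolP/asboolP Px; exact: H.
Qed.

Unset Implicit Arguments. Set Strict Implicit.

Theorem proposition3p11 (R : realType) (X : metricType R)
  (lam : R) (M N : nat) (U : set 'rV[R]_M)
  (A : 'rV[R]_M -> 'I_N -> set X) (phi : 'rV[R]_M -> 'I_N -> X -> X)
  (f : 'rV[R]_M -> X -> X) (mu0 : 'rV[R]_M) :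
  compact [set: X] ->
  (forall (x : X) (r : R), connected (ball x r)) ->
  0 < lam < 1 ->
  positive_lebesgue_measure U ->
  (forall mu, U mu -> piecewise_contraction lam (A mu) (phi mu) (f mu)) ->
  U mu0 ->
  (forall n, (1 <= n)%N -> cells_stable_at U A phi f n mu0) ->
  H_mult (A mu0) (phi mu0) = 0%E ->
  hypothesis_E U A f mu0.
Proof.
move=> cpt _ lam01 _ hpc Umu0 stab Hm.
have [_ _ _ bil fphi] := hpc mu0 Umu0.
have Hl : forall i x y, mdist (phi mu0 i x) (phi mu0 i y) <= lam * mdist x y.
  by move=> i x y; have [c [_ /(_ x y)[]]] := bil i.
pose u (d : R) (n : nat) := (((n%:R)^-1 : R) * ln ((#|J_set U A f n d mu0|)%:R : R))%:E.
have u0 : forall d n, (0 <= u d n)%E.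
  move=> d n; rewrite lee_fin mulr_ge0 // ?invr_ge0 //.
  case: (posnP #|J_set U A f n d mu0|) => [->|h]; first by rewrite ln0.
  by apply: ln_ge0; rewrite ler1n.
have main : forall eta, 0 < eta -> exists2 d0, 0 < d0 &
    forall d, 0 < d <= d0 -> (limn_esup (u d) <= (eta + eta)%:E)%E.
  move=> eta eta0.
  have [n1 Hn1] := esup_small Hm eta0.
  pose n0 := maxn n1 1.
  have n0pos : (0 < n0)%N by rewrite leq_maxr.
  pose mult := mult_cells (A mu0) (phi mu0) n0.
  pose K := maxr 1 mult.
  have K1 : 1 <= K by rewrite le_max lexx.
  have lnK : ln K <= n0%:R * eta.
    have := Hn1 n0 (leq_maxl _ _); rewrite lte_fin => h.
    rewrite /K; case: (leP 1 mult) => hm.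
      have -> : ln mult = n0%:R * (n0%:R^-1 * ln mult).
        by rewrite mulrA divff ?mul1r // pnatr_eq0 -lt0n.
      by rewrite ler_wpM2l // ltW.
    by rewrite ln1 mulr_ge0 // ltW.
  have [m Hm'] := KL (A mu0) n0 cpt lam01 Hl.
  have [dL [dL0 [stL _]]] : cells_stable_at U A phi f (m + n0) mu0 by apply: stab; rewrite addn_gt0 n0pos orbT.
  exists dL => // d /andP[d0 dle].
  have stabd : forall mu, U_delta U mu0 d mu ->
      itineraries (A mu) (f mu) (m + n0) = itineraries (A mu0) (f mu0) (m + n0).
    move=> mu [Umu bmu]; apply: stL; split => //; exact: (le_ball dle bmu).
  have cnt := count_all (W := fun s => exists x, cellS (A mu0) (phi mu0) s x) Hm' K1 n0pos.
  pose C : R := (maxn N 1 ^ (m + n0 + n0))%:R.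
  have C1 : 1 <= C by rewrite ler1n expn_gt0 leq_maxr.
  have lnC0 : 0 <= ln C := ln_ge0 C1.
  pose p1 := (Num.truncn (ln C / eta)).+1.
  apply: (@esup_le _ _ _ p1) => p hp.
  rewrite /u lee_fin.
  have Jle : (#|J_set U A f p d mu0|)%:R <= C * K ^+ (p %/ n0).
    apply: le_trans (cnt p); rewrite ler_nat /J_set; apply: card_le_sub2 => al.
    exact: J_sub_G fphi stabd al.
  have lnJ := ln_bound (ler0n _ _) Jle C1 K1 eta0 lnK (leq_trunc_div p n0).
  have p0 : 0 < p%:R :> R by rewrite ltr0n (leq_trans _ hp).
  have hC : ln C / eta < p%:R.
    by apply: lt_le_trans (Num.Theory.truncnS_gt _) _; rewrite ler_nat.
  have hC' : ln C <= p%:R * eta by rewrite -ler_pdivrMr // ltW.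
  have pinv : 0 <= p%:R^-1 :> R by rewrite invr_ge0 ltW.
  apply: le_trans (ler_wpM2l pinv lnJ) _.
  rewrite mulrDr mulrA mulVf ?mul1r ?gt_eqF // lerD2r mulrC.
  by rewrite ler_pdivrMr // mulrC.
rewrite /hypothesis_E -/u.
change ((fun d => limn_esup (u d)) @ (0:R)^'+ --> 0%:E).
have lb : forall d, (0 <= limn_esup (u d))%E by move=> d; apply: esup_ge0.
apply/fine_cvgP; split.
  have [d0 d00 H] := main 1 ltr01.
  near=> d.
  have dd : 0 < d <= d0.
    by apply/andP; split; near: d; [exact: nbhs_right_gt|exact: nbhs_right_le].
  by rewrite ge0_fin_numE ?lb // (le_lt_trans (H d dd)) // ltry.
apply/cvgrPdist_le => e e0.
have [d0 d00 H] := main (e / 2) (divr_gt0 e0 (ltr0Sn _ 1)).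
near=> d.
have dd : 0 < d <= d0.
  by apply/andP; split; near: d; [exact: nbhs_right_gt|exact: nbhs_right_le].
move: (lb d) (H d dd) => /=.
case: (limn_esup (u d)) => [r| |] //=; rewrite !lee_fin => r0 re.
rewrite sub0r normrN ger0_norm // (le_trans re) //.
by rewrite -splitr.
Unshelve. all: by end_near.
Qed.
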